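(* Let $e^{-1}<p\leq 1$ and let $\bar Q=(\bar q_{j,k})_{j,k\geq1}$ be the generator on $\mathbb N=\{1,2,\dots\}$ with $\bar q_{j,k}=\binom{j-1}{k-1}p^k(1-p)^{j-k}$ for $1\leq k\leq j-1$, $\bar q_{j,j+1}=(j+1)p$, $\bar q_{j,j}=p^j-(2+j)p$, and $\bar q_{j,k}=0$ otherwise. Then the Markov chain with generator $\bar Q$ is transient. *)

(* Defs.v *)
From Stdlib Require Import Reals Lra Lia Arith List Bool.
Import ListNotations.
Open Scope R_scope.

(* The generator \bar Q on the state space N = {1,2,...} (states are nats >= 1;
   the value 0 is not a state and is never used). *)
Definition qbar (p : R) (j k : nat) : R :=
  if ((1 <=? k) && (k <=? j - 1))%nat then
    C (j - 1) (k - 1) * p ^ k * (1 - p) ^ (j - k)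
  else if (k =? j + 1)%nat then INR (j + 1) * p
  else if (k =? j)%nat then p ^ j - INR (2 + j) * p
  else 0.

Definition jump_matrix (Q : nat -> nat -> R) (j k : nat) : R :=
  if (k =? j)%nat then 0 else Q j k / (- Q j j).

Definition sum_states (m : nat) (f : nat -> R) : R :=
  fold_right Rplus 0 (map f (seq 1 m)).

(* First-passage probabilities of the jump chain of \bar Q:
   first_passage p n i j = P_i(first visit to j at a time >= 1 happens at step n).
   Since \bar q_{i,k} = 0 for k > i+1, from state i the chain can only jump to
   states 1..i+1, so the (a priori infinite) sum over intermediate states is
   exactly the finite sum over k = 1..i+1. *)
Fixpoint first_passage (p : R) (n i j : nat) : R :=
  match n with
  | O => 0
  | S O => jump_matrix (qbar p) i j
  | S m => sum_states (i + 1)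
             (fun k => if (k =? j)%nat then 0
                       else jump_matrix (qbar p) i k * first_passage p m k j)
  end.

Definition return_prob_partial (p : R) (N i : nat) : R :=
  sum_states N (fun n => first_passage p n i i).

(* Transience of the chain with generator \bar Q (Feller/Norris): every state
   i >= 1 is transient, i.e. its return probability f_ii = sup_N (partial sums)
   is strictly less than 1.  For a CTMC, transience of a state is equivalent to
   transience for its jump chain (Norris, Thm 3.4.1), and is defined by it here. *)
Definition qbar_transient (p : R) : Prop :=
  forall i : nat, (1 <= i)%nat ->
    exists eps : R, 0 < eps /\
      forall N : nat, return_prob_partial p N i <= 1 - eps.

(* Main.v *)
Require Import Defs.
From Stdlib Require Import Reals Lra Lia Arith List Bool.
Import ListNotations.
Open Scope R_scope.
Lemma exp_convex a u : 0 <= a <= 1 -> exp (a * u) <= 1 - a + a * exp u.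
Proof.
  intros Ha.
  set (f := fun x => exp (a * x) - a * exp x).
  set (f' := fun x => a * exp (a * x) - a * exp x).
  assert (Hd : forall x, derivable_pt_lim f x (f' x)).
  { intros x. unfold f, f'.
    apply derivable_pt_lim_minus.
    - replace (a * exp (a * x)) with (exp (a * x) * (a * 1)) by ring.
      apply (derivable_pt_lim_comp (fun y => a * y) exp).
      + apply derivable_pt_lim_scal. apply derivable_pt_lim_id.
      + apply derivable_pt_lim_exp.
    - apply derivable_pt_lim_scal. apply derivable_pt_lim_exp. }
  assert (Hf0 : f 0 = 1 - a) by (unfold f; rewrite Rmult_0_r, exp_0; ring).
  assert (Hmono : forall x y, x <= y -> exp x <= exp y).
  { intros x y [H|H]; [left; apply exp_increasing; auto| subst; lra]. }
  enough (f u <= 1 - a) by (unfold f in H; lra).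
  destruct (Rtotal_order u 0) as [Hu|[Hu|Hu]].
  - destruct (MVT_cor2 f f' u 0 Hu (fun c _ => Hd c)) as [c [Hc1 Hc2]].
    assert (Hc : 0 <= f' c).
    { unfold f'. assert (exp c <= exp (a*c)) by (apply Hmono; nra). nra. }
    rewrite Hf0 in Hc1. nra.
  - subst. rewrite Hf0. lra.
  - destruct (MVT_cor2 f f' 0 u Hu (fun c _ => Hd c)) as [c [Hc1 Hc2]].
    assert (Hc : f' c <= 0).
    { unfold f'. assert (exp (a*c) <= exp c) by (apply Hmono; nra). nra. }
    rewrite Hf0 in Hc1. nra.
Qed.

Lemma bern r a : 0 < r -> 0 <= a <= 1 -> Rpower r a <= 1 + a * (r - 1).
Proof.
  intros Hr Ha. unfold Rpower.
  pose proof (exp_convex a (ln r) Ha). rewrite exp_ln in H by auto. lra.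
Qed.

Definition lsum (l : list nat) (f : nat -> R) : R := fold_right Rplus 0 (map f l).

Lemma lsum_cons a l f : lsum (a :: l) f = f a + lsum l f.
Proof. reflexivity. Qed.

Lemma lsum_app l1 l2 f : lsum (l1 ++ l2) f = lsum l1 f + lsum l2 f.
Proof.
  induction l1 as [|a l IH]; simpl.
  - unfold lsum; simpl; ring.
  - rewrite !lsum_cons, IH. ring.
Qed.

Lemma lsum_ext_in l f g : (forall x, In x l -> f x = g x) -> lsum l f = lsum l g.
Proof.
  induction l as [|a l IH]; intros H; [reflexivity|].
  rewrite !lsum_cons, (H a (or_introl eq_refl)), IH; auto.
  intros x Hx; apply H; right; auto.
Qed.

Lemma lsum_le_in l f g : (forall x, In x l -> f x <= g x) -> lsum l f <= lsum l g.
Proof.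
  induction l as [|a l IH]; intros H; [unfold lsum; simpl; lra|].
  rewrite !lsum_cons. apply Rplus_le_compat; [apply H; left; auto|].
  apply IH; intros x Hx; apply H; right; auto.
Qed.

Lemma lsum_lin l a b f g :
  lsum l (fun x => a * f x + b * g x) = a * lsum l f + b * lsum l g.
Proof.
  induction l as [|c l IH]; [unfold lsum; simpl; ring|].
  rewrite !lsum_cons, IH. ring.
Qed.

Lemma lsum_plus l f g : lsum l (fun x => f x + g x) = lsum l f + lsum l g.
Proof.
  induction l as [|c l IH]; [unfold lsum; simpl; ring|].
  rewrite !lsum_cons, IH. ring.
Qed.

Lemma lsum_mul_l l c f : lsum l (fun x => c * f x) = c * lsum l f.
Proof.
  induction l as [|d l IH]; [unfold lsum; simpl; ring|].
  rewrite !lsum_cons, IH. ring.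
Qed.

Lemma lsum_0 l : lsum l (fun _ => 0) = 0.
Proof.
  induction l as [|d l IH]; [reflexivity|]. rewrite lsum_cons, IH. ring.
Qed.

Lemma lsum_nonneg l f : (forall x, In x l -> 0 <= f x) -> 0 <= lsum l f.
Proof.
  intros H. rewrite <- (lsum_0 l). apply lsum_le_in. auto.
Qed.

Lemma lsum_swap l1 l2 (g : nat -> nat -> R) :
  lsum l1 (fun a => lsum l2 (fun b => g a b)) = lsum l2 (fun b => lsum l1 (fun a => g a b)).
Proof.
  induction l1 as [|c l IH].
  - unfold lsum at 1; simpl. symmetry. apply (lsum_0 l2).
  - rewrite lsum_cons, IH. rewrite <- lsum_plus. reflexivity.
Qed.

Lemma lsum_map l h f : lsum (map h l) f = lsum l (fun x => f (h x)).
Proof. unfold lsum. rewrite map_map. reflexivity. Qed.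

Lemma lsum_sumf a n f : lsum (seq a (S n)) f = sum_f_R0 (fun m => f (a + m)%nat) n.
Proof.
  induction n as [|n IH].
  - unfold lsum; simpl. rewrite Nat.add_0_r. ring.
  - rewrite seq_S, lsum_app, IH. simpl. unfold lsum; simpl.
    replace (a + S n)%nat with (S (a + n))%nat by lia. ring.
Qed.

Lemma lsum_delta a m i c :
  lsum (seq a m) (fun l => if (l =? i)%nat then c else 0) =
  if ((a <=? i) && (i <? a + m))%nat then c else 0.
Proof.
  revert a. induction m as [|m IH]; intros a.
  - unfold lsum; simpl. rewrite Nat.add_0_r.
    destruct (Nat.leb_spec a i), (Nat.ltb_spec i a); simpl; try lia; auto.
  - simpl seq. rewrite lsum_cons, IH.
    destruct (Nat.eqb_spec a i); destruct (Nat.leb_spec a i); destruct (Nat.ltb_spec i (a + S m));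
    destruct (Nat.leb_spec (S a) i); destruct (Nat.ltb_spec i (S a + m)); simpl; try lia; ring.
Qed.

Definition Dn (p : R) (n : nat) : R := INR (2 + S n) * p - p ^ (S n).
Definition w (p : R) (n l : nat) : R := C n (l - 1) * p ^ l * (1 - p) ^ (S n - l).
Notation jump p := (jump_matrix (qbar p)).

Lemma pow_le1 p n : 0 <= p <= 1 -> p ^ n <= 1.
Proof.
  intros Hp. induction n; simpl; [lra|].
  pose proof (pow_le p n (proj1 Hp)). nra.
Qed.

Lemma Dn_pos p n : 0 < p <= 1 -> INR (S n + 1) * p <= Dn p n /\ 0 < Dn p n.
Proof.
  intros Hp. unfold Dn.
  assert (p ^ S n <= p) by (simpl; pose proof (pow_le1 p n ltac:(lra)); nra).
  replace (INR (2 + S n)) with (INR n + 3) by (rewrite plus_INR, !S_INR; simpl; ring).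
  replace (INR (S n + 1)) with (INR n + 2) by (rewrite plus_INR, !S_INR; simpl; ring).
  pose proof (pos_INR n). split; nra.
Qed.

Lemma C_nonneg n k : 0 <= C n k.
Proof.
  unfold C. apply Rle_mult_inv_pos; [apply pos_INR|].
  apply Rmult_lt_0_compat; apply INR_fact_lt_0.
Qed.

Lemma w_nonneg p n l : 0 <= p <= 1 -> 0 <= w p n l.
Proof.
  intros Hp. unfold w. pose proof (C_nonneg n (l-1)).
  pose proof (pow_le p l ltac:(lra)). pose proof (pow_le (1-p) (S n - l) ltac:(lra)).
  apply Rmult_le_pos; [apply Rmult_le_pos|]; auto.
Qed.

Lemma jump_low p n l : (1 <= l <= n)%nat -> jump p (S n) l = w p n l / Dn p n.
Proof.
  intros Hl. unfold jump_matrix, qbar.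
  rewrite (proj2 (Nat.eqb_neq l (S n)) ltac:(lia)).
  rewrite (proj2 (Nat.leb_le 1 l) ltac:(lia)), (proj2 (Nat.leb_le l (S n - 1)) ltac:(lia)).
  rewrite (proj2 (Nat.leb_gt (S n) (S n - 1)) ltac:(lia)), andb_false_r.
  rewrite (proj2 (Nat.eqb_neq (S n) (S n + 1)) ltac:(lia)), Nat.eqb_refl. simpl andb.
  unfold w, Dn. replace (S n - 1)%nat with n by lia.
  unfold Rdiv. f_equal. f_equal. ring.
Qed.

Lemma jump_diag p n : jump p n n = 0.
Proof. unfold jump_matrix. rewrite Nat.eqb_refl. reflexivity. Qed.

Lemma jump_top p n : jump p (S n) (S (S n)) = INR (S n + 1) * p / Dn p n.
Proof.
  unfold jump_matrix, qbar.
  rewrite (proj2 (Nat.eqb_neq (S (S n)) (S n)) ltac:(lia)).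
  rewrite (proj2 (Nat.leb_gt (S (S n)) (S n - 1)) ltac:(lia)), andb_false_r.
  rewrite (proj2 (Nat.leb_gt (S n) (S n - 1)) ltac:(lia)), andb_false_r.
  rewrite (proj2 (Nat.eqb_eq (S (S n)) (S n + 1)) ltac:(lia)).
  rewrite (proj2 (Nat.eqb_neq (S n) (S n + 1)) ltac:(lia)), Nat.eqb_refl.
  unfold Dn. unfold Rdiv. f_equal. f_equal. ring.
Qed.

Lemma jump_out p n l : (S (S n) < l)%nat -> jump p (S n) l = 0.
Proof.
  intros Hl. unfold jump_matrix, qbar.
  rewrite (proj2 (Nat.eqb_neq l (S n)) ltac:(lia)).
  rewrite (proj2 (Nat.leb_gt l (S n - 1)) ltac:(lia)), andb_false_r.
  rewrite (proj2 (Nat.eqb_neq l (S n + 1)) ltac:(lia)).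
  unfold Rdiv. ring.
Qed.

Lemma jump_nonneg p n l : 0 < p <= 1 -> (1 <= l)%nat -> 0 <= jump p (S n) l.
Proof.
  intros Hp Hl. destruct (Dn_pos p n Hp) as [HD1 HD2].
  destruct (Nat.le_gt_cases l n).
  - rewrite jump_low by lia. apply Rle_mult_inv_pos; auto. apply w_nonneg; lra.
  - destruct (Nat.eq_dec l (S n)) as [->|]; [rewrite jump_diag; lra|].
    destruct (Nat.eq_dec l (S (S n))) as [->|]; [rewrite jump_top|rewrite jump_out by lia; lra].
    apply Rle_mult_inv_pos; auto. pose proof (pos_INR (S n + 1)). nra.
Qed.

Lemma jump_sum p n g : 0 < p <= 1 ->
  lsum (seq 1 (S (S n))) (fun l => jump p (S n) l * g l) =
  (lsum (seq 1 n) (fun l => w p n l * g l) + INR (S n + 1) * p * g (S (S n))) / Dn p n.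
Proof.
  intros Hp. destruct (Dn_pos p n Hp) as [HD1 HD2].
  rewrite seq_S, seq_S, !lsum_app.
  rewrite (lsum_ext_in (seq 1 n) _ (fun l => / Dn p n * (w p n l * g l))).
  2:{ intros x Hx. apply in_seq in Hx. rewrite jump_low by lia. unfold Rdiv. ring. }
  rewrite lsum_mul_l. set (K := INR (S n + 1)). unfold lsum; simpl.
  replace (S (n + 1)) with (S (S n)) by lia.
  rewrite jump_diag, jump_top. fold K. field. lra.
Qed.

Lemma w_sum p n : lsum (seq 1 (S n)) (w p n) = p.
Proof.
  rewrite lsum_sumf.
  rewrite (sum_eq _ (fun m => C n m * p ^ m * (1 - p) ^ (n - m) * p)).
  - rewrite <- scal_sum, <- binomial. replace (p + (1 - p)) with 1 by ring.
    rewrite pow1. ring.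
  - intros m Hm. unfold w. replace (1 + m - 1)%nat with m by lia.
    replace (S n - (1 + m))%nat with (n - m)%nat by lia.
    replace (1 + m)%nat with (S m) by lia. simpl. ring.
Qed.

Lemma C_shift n m : C n m / INR (S m) = C (S n) (S m) / INR (S n).
Proof.
  unfold C. replace (S n - S m)%nat with (n - m)%nat by lia.
  rewrite (fact_simpl n), (fact_simpl m), !mult_INR.
  pose proof (INR_fact_neq_0 n). pose proof (INR_fact_neq_0 m).
  pose proof (INR_fact_neq_0 (n - m)).
  assert (INR (S n) <> 0) by (apply not_0_INR; lia).
  assert (INR (S m) <> 0) by (apply not_0_INR; lia).
  field. auto.
Qed.

Lemma w_inv_sum p n : 0 <= p <= 1 ->
  lsum (seq 1 (S n)) (fun l => w p n l / INR l) <= / INR (S n).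
Proof.
  intros Hp. rewrite lsum_sumf.
  set (T := fun j => C (S n) j * p ^ j * (1 - p) ^ (S n - j)).
  rewrite (sum_eq _ (fun m => T (S m) * / INR (S n))).
  - rewrite <- scal_sum.
    assert (Hs : sum_f_R0 (fun m => T (S m)) n <= 1).
    { assert (H1 : sum_f_R0 T (S n) = 1).
      { unfold T. rewrite <- binomial. replace (p + (1 - p)) with 1 by ring. apply pow1. }
      rewrite decomp_sum in H1 by lia. simpl pred in H1.
      assert (0 <= T 0%nat).
      { unfold T. pose proof (C_nonneg (S n) 0). pose proof (pow_le (1-p) (S n - 0) ltac:(lra)).
        replace (S n - 0)%nat with (S n) in * by lia. rewrite pow_O. rewrite Rmult_1_r. apply Rmult_le_pos; auto. }
      lra. }
    assert (0 < / INR (S n)) by (apply Rinv_0_lt_compat, lt_0_INR; lia).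
    nra.
  - intros m Hm. unfold w, T. replace (1 + m - 1)%nat with m by lia.
    replace (S n - (1 + m))%nat with (S n - S m)%nat by lia.
    replace (1 + m)%nat with (S m) by lia.
    transitivity (C n m / INR (S m) * (p ^ S m * (1 - p) ^ (S n - S m))).
    + unfold Rdiv. ring.
    + rewrite C_shift. unfold Rdiv. ring.
Qed.

Lemma ln_div x y : 0 < x -> 0 < y -> ln (x / y) = ln x - ln y.
Proof. intros. unfold Rdiv. rewrite ln_mult, ln_Rinv; try ring; auto. apply Rinv_0_lt_compat; auto. Qed.

Lemma C_nn n : C n n = 1.
Proof. unfold C. rewrite Nat.sub_diag. simpl. field. apply INR_fact_neq_0. Qed.

Definition V (a : R) (l : nat) : R := Rpower (INR l) (- a).

Lemma V_pos a l : 0 < V a l.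
Proof. unfold V, Rpower. apply exp_pos. Qed.

Lemma jensen p a n : 0 < p <= 1 -> 0 <= a <= 1 ->
  lsum (seq 1 (S n)) (fun l => w p n l * V a l) <= p * Rpower (INR (S n) * p) (- a).
Proof.
  intros Hp Ha.
  set (y := INR (S n) * p).
  assert (Hy : 0 < y) by (unfold y; apply Rmult_lt_0_compat; [apply lt_0_INR; lia|lra]).
  set (Ry := Rpower y (-a)).
  assert (HRy : 0 < Ry) by (unfold Ry, Rpower; apply exp_pos).
  apply Rle_trans with (lsum (seq 1 (S n)) (fun l => Ry * ((1 - a) * w p n l + (a * y) * (w p n l / INR l)))).
  - apply lsum_le_in. intros l Hl. apply in_seq in Hl.
    assert (Hl0 : 0 < INR l) by (apply lt_0_INR; lia).
    assert (HV : V a l = Ry * Rpower (y / INR l) a).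
    { unfold V, Ry, Rpower. rewrite <- exp_plus. f_equal. rewrite ln_div by auto. ring. }
    rewrite HV.
    pose proof (bern (y / INR l) a ltac:(apply Rdiv_lt_0_compat; auto) Ha).
    pose proof (w_nonneg p n l ltac:(lra)).
    replace ((1 - a) * w p n l + a * y * (w p n l / INR l)) with (w p n l * (1 + a * (y / INR l - 1))) by (field; lra).
    assert (0 <= Ry * w p n l) by (apply Rmult_le_pos; lra).
    assert (Ry * w p n l * Rpower (y / INR l) a <= Ry * w p n l * (1 + a * (y / INR l - 1)))
      by (apply Rmult_le_compat_l; auto).
    lra.
  - rewrite lsum_mul_l, lsum_lin, w_sum.
    pose proof (w_inv_sum p n ltac:(lra)).
    assert (y * / INR (S n) = p) by (unfold y; field; apply not_0_INR; lia).
    rewrite (Rmult_comm p Ry). apply Rmult_le_compat_l; [lra|].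
    assert (0 <= a * y) by (apply Rmult_le_pos; lra).
    assert (a * y * lsum (seq 1 (S n)) (fun l => w p n l / INR l) <= a * y * / INR (S n))
      by (apply Rmult_le_compat_l; auto).
    nra.
Qed.

Lemma drift p a n : 0 < p <= 1 -> 0 <= a <= 1 -> Rpower p (- a) <= 1 + a ->
  lsum (seq 1 (S (S n))) (fun l => jump_matrix (qbar p) (S n) l * V a l) <= V a (S n).
Proof.
  intros Hp Ha Hpa.
  destruct (Dn_pos p n Hp) as [HD1 HD2].
  rewrite jump_sum by auto.
  match goal with |- ?X / ?D <= ?Y =>
    enough (HX : X <= Y * D) by (apply Rmult_le_reg_r with D; [auto|]; unfold Rdiv;
                                rewrite Rmult_assoc, Rinv_l by lra; lra) end.
  assert (HT : lsum (seq 1 (S n)) (fun l => w p n l * V a l) =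
               lsum (seq 1 n) (fun l => w p n l * V a l) + p ^ S n * V a (S n)).
  { rewrite seq_S, lsum_app. unfold lsum at 2; simpl.
    unfold w. replace (S n - S n)%nat with 0%nat by lia. replace (S n - 1)%nat with n by lia.
    rewrite C_nn. simpl. ring. }
  pose proof (jensen p a n Hp Ha) as HJ.
  assert (HR : Rpower (INR (S n) * p) (- a) = V a (S n) * Rpower p (- a)).
  { unfold V, Rpower. rewrite <- exp_plus. f_equal.
    rewrite ln_mult; [ring| apply lt_0_INR; lia | lra]. }
  assert (Hk : 0 < INR (S n)) by (apply lt_0_INR; lia).
  assert (HV2 : V a (S (S n)) = V a (S n) * Rpower (INR (S n) / INR (S (S n))) a).
  { unfold V, Rpower. rewrite <- exp_plus. f_equal.
    rewrite ln_div; [ring| auto | apply lt_0_INR; lia]. }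
  pose proof (bern (INR (S n) / INR (S (S n))) a ltac:(apply Rdiv_lt_0_compat; auto; apply lt_0_INR; lia) Ha) as HB.
  set (k := INR (S n)) in *.
  assert (Hk1 : INR (S (S n)) = k + 1) by (unfold k; rewrite (S_INR (S n)); ring).
  assert (Hk2 : INR (S n + 1) = k + 1) by (unfold k; rewrite plus_INR; simpl; ring).
  assert (Hk3 : INR (2 + S n) = k + 2) by (unfold k; rewrite plus_INR; simpl; ring).
  rewrite Hk1 in HB, HV2.
  replace (1 + a * (k / (k + 1) - 1)) with ((k + 1 - a) / (k + 1)) in HB by (field; lra).
  pose proof (V_pos a (S n)) as HVp.
  assert (H4 : (k + 1) * V a (S (S n)) <= V a (S n) * (k + 1 - a)).
  { rewrite HV2. 
    assert ((k+1) * Rpower (k / (k + 1)) a <= k + 1 - a).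
    { apply Rmult_le_reg_r with (/ (k + 1)); [apply Rinv_0_lt_compat; lra|].
      replace ((k + 1) * Rpower (k / (k + 1)) a * / (k + 1)) with (Rpower (k / (k + 1)) a) by (field; lra).
      exact HB. }
    nra. }
  unfold Dn. rewrite Hk2, Hk3.
  rewrite HR in HJ.
  assert (V a (S n) * Rpower p (-a) <= V a (S n) * (1 + a)) by (apply Rmult_le_compat_l; lra).
  assert (0 <= p) by lra.
  nra.
Qed.

Lemma row_sum p n : 0 < p <= 1 ->
  lsum (seq 1 (S n + 1)) (fun l => jump_matrix (qbar p) (S n) l * 1) = 1.
Proof.
  intros Hp. destruct (Dn_pos p n Hp) as [HD1 HD2].
  replace (S n + 1)%nat with (S (S n)) by lia.
  rewrite jump_sum by auto.
  assert (HT : lsum (seq 1 (S n)) (w p n) =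
               lsum (seq 1 n) (fun l => w p n l * 1) + p ^ S n).
  { rewrite seq_S, lsum_app.
    replace (lsum [(1 + n)%nat] (w p n)) with (p ^ S n).
    2:{ unfold lsum; simpl. unfold w. replace (S n - S n)%nat with 0%nat by lia.
        replace (S n - 1)%nat with n by lia. rewrite C_nn. simpl. ring. }
    rewrite (lsum_ext_in _ (fun l => w p n l * 1) (w p n)) by (intros; ring). ring. }
  rewrite w_sum in HT. unfold Dn.
  replace (INR (2 + S n)) with (INR (S n + 1) + 1) by (rewrite !plus_INR; simpl; ring).
  field_simplify; [|unfold Dn in HD2; replace (INR (2 + S n)) with (INR (S n + 1) + 1) in HD2 by (rewrite !plus_INR; simpl; ring); lra].
  replace (lsum (seq 1 n) (fun l => w p n l * 1)) with (p - p ^ S n) by lra.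
  field. unfold Dn in HD2; replace (INR (2 + S n)) with (INR (S n + 1) + 1) in HD2 by (rewrite !plus_INR; simpl; ring); lra.
Qed.

Definition Hs (p : R) (N k i : nat) : R := lsum (seq 1 N) (fun n => first_passage p n k i).

Lemma H_succ p N k i :
  Hs p (S N) k i = jump_matrix (qbar p) k i +
    lsum (seq 1 (k + 1)) (fun l => if (l =? i)%nat then 0 else jump_matrix (qbar p) k l * Hs p N l i).
Proof.
  unfold Hs. simpl seq. rewrite lsum_cons. f_equal.
  rewrite <- seq_shift, lsum_map.
  rewrite (lsum_ext_in _ _ (fun n => lsum (seq 1 (k + 1))
       (fun l => if (l =? i)%nat then 0 else jump_matrix (qbar p) k l * first_passage p n l i))).
  2:{ intros n Hn. apply in_seq in Hn. destruct n; [lia|]. reflexivity. }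
  rewrite lsum_swap. apply lsum_ext_in. intros l _.
  destruct (l =? i)%nat; [apply lsum_0|]. apply lsum_mul_l.
Qed.

Lemma step_bound p N i k (B : nat -> R) : 0 < p <= 1 -> (1 <= i)%nat -> (1 <= k)%nat ->
  1 <= B i -> (forall l, (1 <= l)%nat -> l <> i -> Hs p N l i <= B l) ->
  Hs p (S N) k i <= lsum (seq 1 (k + 1)) (fun l => jump_matrix (qbar p) k l * B l).
Proof.
  intros Hp Hi Hk HBi HB. rewrite H_succ.
  destruct k as [|n]; [lia|].
  assert (Hj : jump_matrix (qbar p) (S n) i =
     lsum (seq 1 (S n + 1)) (fun l => if (l =? i)%nat then jump_matrix (qbar p) (S n) i else 0)).
  { rewrite lsum_delta.
    destruct (Nat.leb_spec 1 i); destruct (Nat.ltb_spec i (1 + (S n + 1))); simpl; try lia; auto.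
    apply jump_out. lia. }
  rewrite Hj, <- lsum_plus. apply lsum_le_in. intros l Hl. apply in_seq in Hl.
  pose proof (jump_nonneg p n l Hp ltac:(lia)).
  destruct (Nat.eqb_spec l i).
  - subst. nra.
  - pose proof (HB l ltac:(lia) n0).
    assert (jump_matrix (qbar p) (S n) l * Hs p N l i <= jump_matrix (qbar p) (S n) l * B l)
      by (apply Rmult_le_compat_l; auto).
    lra.
Qed.

Lemma bounds p a i : 0 < p <= 1 -> 0 <= a <= 1 -> Rpower p (- a) <= 1 + a -> (1 <= i)%nat ->
  forall N k, (1 <= k)%nat ->
    Hs p N k i <= 1 /\ Hs p N k i <= Rpower (INR i) a * V a k.
Proof.
  intros Hp Ha Hpa Hi.
  set (A := Rpower (INR i) a).
  assert (HA : 0 < A) by (unfold A, Rpower; apply exp_pos).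
  assert (HAi : A * V a i = 1).
  { unfold A, V, Rpower. rewrite <- exp_plus. replace (a * ln (INR i) + - a * ln (INR i)) with 0 by ring.
    apply exp_0. }
  induction N as [|N IH]; intros k Hk.
  - unfold Hs, lsum; simpl. pose proof (V_pos a k). split; nra.
  - destruct k as [|n]; [lia|]. split.
    + eapply Rle_trans.
      * apply (step_bound p N i (S n) (fun _ => 1)); auto; [lra|]. intros l Hl _. apply IH; auto.
      * rewrite row_sum; auto. lra.
    + eapply Rle_trans.
      * apply (step_bound p N i (S n) (fun l => A * V a l)); auto; [lra|]. intros l Hl _. apply IH; auto.
      * rewrite (lsum_ext_in _ _ (fun l => A * (jump_matrix (qbar p) (S n) l * V a l))) by (intros; ring).
        rewrite lsum_mul_l. replace (S n + 1)%nat with (S (S n)) by lia.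
        apply Rmult_le_compat_l; [lra|]. apply drift; auto.
Qed.

Theorem proposition8 (p : R) (hp1 : exp (-1) < p) (hp2 : p <= 1) :
  qbar_transient p.
Proof.
  assert (Hp0 : 0 < p) by (pose proof (exp_pos (-1)); lra).
  assert (Hp : 0 < p <= 1) by lra.
  assert (Hl1 : -1 < ln p).
  { rewrite <- (ln_exp (-1)). apply ln_increasing; auto. apply exp_pos. }
  assert (Hl2 : ln p <= 0).
  { destruct hp2 as [H|H]; [|subst; rewrite ln_1; lra].
    rewrite <- ln_1. left. apply ln_increasing; auto. }
  set (a := (1 + ln p) / 2).
  assert (Ha : 0 < a <= 1 / 2) by (unfold a; lra).
  assert (Ha' : 0 <= a <= 1) by lra.
  assert (Hpa : Rpower p (- a) <= 1 + a).
  { unfold Rpower.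
    set (E := exp (- a * ln p)). set (E' := exp (a * ln p)).
    assert (HEE : E * E' = 1).
    { unfold E, E'. rewrite <- exp_plus. replace (- a * ln p + a * ln p) with 0 by ring. apply exp_0. }
    assert (HE' : 1 + a * ln p <= E') by apply exp_ineq1_le.
    assert (HE : 0 < E) by apply exp_pos.
    assert (H1 : 1 <= (1 + a) * (1 + a * ln p)).
    { unfold a.
      replace ((1 + (1 + ln p) / 2) * (1 + (1 + ln p) / 2 * ln p)) with
        (1 + ((1 + ln p) / 2) * ((1 + ln p) * (1 + ln p / 2))) by field.
      assert (0 <= (1 + ln p) / 2 * ((1 + ln p) * (1 + ln p / 2))).
      { apply Rmult_le_pos; [lra|]. apply Rmult_le_pos; lra. }
      lra. }
    assert (H2 : 1 <= (1 + a) * E') by nra.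
    nra. }
  intros i Hi. destruct i as [|n0]; [lia|].
  set (A := Rpower (INR (S n0)) a).
  set (t := jump_matrix (qbar p) (S n0) (S (S n0))).
  set (AV := A * V a (S (S n0))).
  assert (HAV : 0 < AV < 1).
  { unfold AV, A, V, Rpower. rewrite <- exp_plus. split; [apply exp_pos|].
    rewrite <- exp_0. apply exp_increasing.
    assert (ln (INR (S n0)) < ln (INR (S (S n0)))).
    { apply ln_increasing; [apply lt_0_INR; lia| apply lt_INR; lia]. }
    nra. }
  assert (Hrow := row_sum p n0 Hp).
  replace (S n0 + 1)%nat with (S (S n0)) in Hrow by lia.
  rewrite seq_S, lsum_app in Hrow.
  replace (lsum [(1 + S n0)%nat] (fun l => jump_matrix (qbar p) (S n0) l * 1)) with t in Hrow
    by (unfold lsum, t; simpl; ring).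
  assert (Hrest : 0 <= lsum (seq 1 (S n0)) (fun l => jump_matrix (qbar p) (S n0) l * 1)).
  { apply lsum_nonneg. intros l Hl. apply in_seq in Hl.
    pose proof (jump_nonneg p n0 l Hp ltac:(lia)). lra. }
  assert (Ht : 0 < t).
  { unfold t. rewrite jump_top. destruct (Dn_pos p n0 Hp).
    apply Rdiv_lt_0_compat; auto. apply Rmult_lt_0_compat; auto. apply lt_0_INR; lia. }
  assert (Heps1 : t * (1 - AV) <= 1).
  { assert (t <= 1) by lra.
    assert (t * (1 - AV) <= t * 1) by (apply Rmult_le_compat_l; lra). lra. }
  exists (t * (1 - AV)). split; [nra|].
  intros N.
  change (return_prob_partial p N (S n0)) with (Hs p N (S n0) (S n0)).
  destruct N as [|M].
  - unfold Hs, lsum; simpl. apply Rge_le, Rge_minus, Rle_ge, Heps1.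
  - eapply Rle_trans.
    + apply (step_bound p M (S n0) (S n0) (fun l => if (l =? S (S n0))%nat then AV else 1)); auto; try lia.
      * rewrite (proj2 (Nat.eqb_neq (S n0) (S (S n0))) ltac:(lia)). lra.
      * intros l Hl _. destruct (Nat.eqb_spec l (S (S n0))).
        -- subst. apply (bounds p a (S n0) Hp Ha' Hpa ltac:(lia) M (S (S n0)) ltac:(lia)).
        -- apply (bounds p a (S n0) Hp Ha' Hpa ltac:(lia) M l Hl).
    + replace (S n0 + 1)%nat with (S (S n0)) by lia.
      rewrite seq_S, lsum_app.
      rewrite (lsum_ext_in (seq 1 (S n0)) _ (fun l => jump_matrix (qbar p) (S n0) l * 1)).
      2:{ intros x Hx. apply in_seq in Hx. rewrite (proj2 (Nat.eqb_neq x (S (S n0))) ltac:(lia)). ring. }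
      replace (1 + S n0)%nat with (S (S n0)) by lia.
      rewrite lsum_cons. change (lsum [] ?f) with 0. cbv beta.
      rewrite Nat.eqb_refl. fold t. lra.
Qed.
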